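(* The following are equivalent for an integral domain $D$: (1) $D$ is a $\ast$-super SH domain, i.e. for every nonzero nonunit $x$ of $D$, $xD$ is a $\ast$-product of finitely many $\ast$-super homog ideals; (2) $D$ is a $\ast$-IRKT.
   Context: $\ast$ is a star operation on $D$ of finite character. A $\ast$-ideal is a nonzero fractional ideal $I$ with $I^\ast=I$; it is of finite type if $I=J^\ast$ for some nonzero finitely generated $J$. A maximal $\ast$-ideal is an integral $\ast$-ideal maximal among proper integral $\ast$-ideals. A nonzero fractional ideal $I$ is $\ast$-invertible if $(II^{-1})^\ast=D$. The $\ast$-product of $I_1,\dots,I_n$ is $(I_1\cdots I_n)^\ast$. A nonzero proper integral $\ast$-ideal $I$ of finite type is $\ast$-super homog if (1) every $\ast$-ideal of finite type containing $I$ is $\ast$-invertible, and (2) $(A+B)^\ast\neq D$ for every pair $A,B$ of proper integral $\ast$-ideals of finite type containing $I$. $D$ is a $\ast$-IRKT ($\ast$-independent ring of Krull type) if (i) $D_P$ is a valuation domain for every maximal $\ast$-ideal $P$, (ii) $D=\bigcap D_P$ over all maximal $\ast$-ideals $P$ with the intersection locally finite (each nonzero element lies in only finitely many maximal $\ast$-ideals), and (iii) no two distinct maximal $\ast$-ideals contain a common nonzero prime ideal. *)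

(* Defs.v *)
(* An integral domain D is modelled as a subring D of a
   field K which is its quotient field; fractional ideals are D-submodules
   of K, represented as predicates K -> Prop (compared with Leibniz
   equality, which is extensional equality up to the whitelisted
   functional/propositional extensionality axioms). *)
From HB Require Import structures.
From Stdlib Require List.
From mathcomp Require Import all_boot all_order all_algebra.
Set Implicit Arguments. Unset Strict Implicit. Unset Printing Implicit Defensive.
Import GRing.Theory.
Local Open Scope ring_scope.

Definition kset (K : Type) := K -> Prop.

Section Defs.
Variables (K : fieldType) (D : kset K).

Definition subs (A B : kset K) : Prop := forall x, A x -> B x.

Definition is_subring : Prop :=
  D 0 /\ D 1 /\ (forall a b, D a -> D b -> D (a - b)) /\
  (forall a b, D a -> D b -> D (a * b)).

Definition is_quotient_field : Prop :=
  forall x : K, exists a b, D a /\ D b /\ b != 0 /\ x = a / b.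

Definition submodule (I : kset K) : Prop :=
  I 0 /\ (forall a b, I a -> I b -> I (a + b)) /\
  (forall d a, D d -> I a -> I (d * a)).

Definition fractional (I : kset K) : Prop :=
  submodule I /\ (exists x, I x /\ x != 0) /\
  (exists d, D d /\ d != 0 /\ forall x, I x -> D (d * x)).

Definition gen (A : kset K) : kset K :=
  fun y => forall S, submodule S -> subs A S -> S y.

Definition fin_gen (J : kset K) : Prop :=
  exists s : seq K, J = gen (fun x => x \in s).

Definition prin (x : K) : kset K := fun y => exists d, D d /\ y = d * x.

Definition mulset (x : K) (I : kset K) : kset K :=
  fun y => exists z, I z /\ y = x * z.

Definition iprod (I J : kset K) : kset K :=
  gen (fun y => exists a b, I a /\ J b /\ y = a * b).

Definition isum (I J : kset K) : kset K :=
  fun y => exists a b, I a /\ J b /\ y = a + b.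

Definition iinv (I : kset K) : kset K := fun x => forall y, I y -> D (x * y).

Definition star_operation (star : kset K -> kset K) : Prop :=
  (forall I, fractional I -> fractional (star I)) /\
  (forall x, x != 0 -> star (prin x) = prin x) /\
  (forall x I, x != 0 -> fractional I -> star (mulset x I) = mulset x (star I)) /\
  (forall I, fractional I -> subs I (star I)) /\
  (forall I J, fractional I -> fractional J -> subs I J -> subs (star I) (star J)) /\
  (forall I, fractional I -> star (star I) = star I).

Definition finite_character (star : kset K -> kset K) : Prop :=
  forall I, fractional I ->
    star I = (fun x => exists J, fin_gen J /\ (exists y, J y /\ y != 0) /\
                                 subs J I /\ star J x).

Section Star.
Variable star : kset K -> kset K.

Definition star_ideal (I : kset K) : Prop := fractional I /\ star I = I.

Definition finite_type (I : kset K) : Prop :=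
  exists J, fin_gen J /\ (exists y, J y /\ y != 0) /\ I = star J.

Definition proper_integral (I : kset K) : Prop := subs I D /\ I <> D.

Definition maximal_star_ideal (P : kset K) : Prop :=
  star_ideal P /\ proper_integral P /\
  forall Q, star_ideal Q -> proper_integral Q -> subs P Q -> Q = P.

Definition star_invertible (I : kset K) : Prop :=
  fractional I /\ star (iprod I (iinv I)) = D.

Definition star_product (ls : seq (kset K)) : kset K :=
  star (foldr iprod D ls).

Definition star_super_homog (I : kset K) : Prop :=
  star_ideal I /\ finite_type I /\ proper_integral I /\
  (forall J, star_ideal J -> finite_type J -> subs I J -> star_invertible J) /\
  (forall A B, star_ideal A -> finite_type A -> proper_integral A -> subs I A ->
               star_ideal B -> finite_type B -> proper_integral B -> subs I B ->
               star (isum A B) <> D).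

Definition star_super_SH : Prop :=
  forall x, D x -> x != 0 -> ~ D x^-1 ->
    exists ls : seq (kset K),
      (forall I, List.In I ls -> star_super_homog I) /\
      prin x = star_product ls.

Definition localization (P : kset K) : kset K :=
  fun y => exists a s, D a /\ D s /\ ~ P s /\ y = a / s.

Definition valuation_domain (V : kset K) : Prop :=
  forall x : K, x != 0 -> V x \/ V x^-1.

Definition nonzero_prime_ideal (R : kset K) : Prop :=
  submodule R /\ proper_integral R /\ (exists y, R y /\ y != 0) /\
  (forall a b, D a -> D b -> R (a * b) -> R a \/ R b).

Definition star_IRKT : Prop :=
  (forall P, maximal_star_ideal P -> valuation_domain (localization P)) /\
  (forall x, D x <-> (forall P, maximal_star_ideal P -> localization P x)) /\
  (forall x, D x -> x != 0 ->
     exists ls : seq (kset K),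
       forall P, maximal_star_ideal P -> P x -> List.In P ls) /\
  (forall P Q R, maximal_star_ideal P -> maximal_star_ideal Q -> P <> Q ->
     nonzero_prime_ideal R -> subs R P -> subs R Q -> False).

End Star.
End Defs.

(* Main.v *)
Require Import Defs.
From HB Require Import structures.
From mathcomp Require Import all_boot all_order all_algebra.
From mathcomp Require Import ring.
From mathcomp Require boolp classical_sets.
From Stdlib Require Import Classical ClassicalEpsilon FunctionalExtensionality PropExtensionality ProofIrrelevance.
From Stdlib Require List.
Set Implicit Arguments. Unset Strict Implicit. Unset Printing Implicit Defensive.
Import GRing.Theory.
Local Open Scope ring_scope.

Ltac fld := field; repeat (apply/andP; split); try done.

Section Main.
Variables (K : fieldType) (D : kset K) (star : kset K -> kset K).
Hypothesis HD : is_subring D.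
Hypothesis HQ : is_quotient_field D.
Hypothesis HS : star_operation D star.
Hypothesis HF : finite_character D star.

Lemma seteq (A B : kset K) : subs A B -> subs B A -> A = B.
Proof.
move=> h1 h2; apply: functional_extensionality => x.
apply: propositional_extensionality; split; [exact: h1|exact: h2].
Qed.

Lemma D0 : D 0. Proof. by case: HD. Qed.
Lemma D1 : D 1. Proof. by case: HD => _ []. Qed.
Lemma Dsub a b : D a -> D b -> D (a - b). Proof. by case: HD => _ [_ [h _]]; exact: h. Qed.
Lemma Dmul a b : D a -> D b -> D (a * b). Proof. by case: HD => _ [_ [_ h]]; exact: h. Qed.
Lemma Dopp a : D a -> D (- a).
Proof. by move=> ha; rewrite -sub0r; apply: Dsub => //; exact: D0. Qed.
Lemma Dadd a b : D a -> D b -> D (a + b).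
Proof. by move=> ha hb; rewrite -[b]opprK; apply: Dsub => //; exact: Dopp. Qed.
Lemma Dm1 : D (-1). Proof. exact: Dopp D1. Qed.

Lemma Dsm : submodule D D.
Proof. split; first exact: D0. split; [exact: Dadd| move=> d a; exact: Dmul]. Qed.

Lemma sm0 X : submodule D X -> X 0. Proof. by case. Qed.
Lemma smadd X a b : submodule D X -> X a -> X b -> X (a + b).
Proof. by case=> _ [h _]; exact: h. Qed.
Lemma smmul X d a : submodule D X -> D d -> X a -> X (d * a).
Proof. by case=> _ [_ h]; exact: h. Qed.
Lemma smmulr X d a : submodule D X -> D d -> X a -> X (a * d).
Proof. by move=> h hd ha; rewrite mulrC; exact: smmul. Qed.
Lemma smopp X a : submodule D X -> X a -> X (- a).
Proof. by move=> h ha; rewrite -mulN1r; apply: smmul => //; exact: Dm1. Qed.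
Lemma smsub X a b : submodule D X -> X a -> X b -> X (a - b).
Proof. by move=> h ha hb; apply: smadd => //; exact: smopp. Qed.

Lemma gen_sm A : submodule D (gen D A).
Proof.
split; first by move=> S hS _; exact: sm0.
split.
  by move=> a b ha hb S hS hA; apply: smadd => //; [exact: ha|exact: hb].
by move=> d a hd ha S hS hA; apply: smmul => //; exact: ha.
Qed.
Lemma gen_in A : subs A (gen D A).
Proof. by move=> x hx S _ hA; exact: hA. Qed.
Lemma gen_min A S : submodule D S -> subs A S -> subs (gen D A) S.
Proof. by move=> hS hA x hx; exact: hx. Qed.

Definition gens (s : seq K) := gen D (fun x => x \in s).

Lemma sm_mul u T : submodule D T -> submodule D (fun y => T (u * y)).
Proof.
move=> hT; split; first by rewrite mulr0; exact: sm0.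
split; first by move=> a b ha hb; rewrite mulrDr; exact: smadd.
by move=> d a hd ha; rewrite mulrCA; exact: smmul.
Qed.

Lemma qf x : exists a b, D a /\ D b /\ b != 0 /\ x = a / b.
Proof. exact: HQ. Qed.

Lemma bound_gens (s : seq K) : exists d, D d /\ d != 0 /\ forall x, gens s x -> D (d * x).
Proof.
elim: s => [|a s [d [hd [hd0 hs]]]].
  exists 1; split; [exact: D1| split; [exact: oner_neq0|]].
  move=> x hx; rewrite mul1r; apply: (gen_min Dsm) hx => y; by rewrite in_nil.
have [p [q [hp [hq [hq0 ->]]]]] := qf a.
exists (q * d); split; first exact: Dmul.
split; first by rewrite mulf_neq0.
move=> x hx; apply: (gen_min (sm_mul (q * d) Dsm)) hx => y.
rewrite in_cons => /orP [/eqP ->|hy].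
  have -> : q * d * (p / q) = d * p by fld.
  exact: Dmul.
rewrite -mulrA; apply: Dmul => //; apply: hs; exact: gen_in.
Qed.

Lemma gens_frac s : (exists y, gens s y /\ y != 0) -> fractional D (gens s).
Proof.
move=> h; split; first exact: gen_sm.
split => //; exact: bound_gens.
Qed.

Lemma fin_gen_frac J : fin_gen D J -> (exists y, J y /\ y != 0) -> fractional D J.
Proof. by move=> [s ->]; exact: gens_frac. Qed.

Lemma Dfrac : fractional D D.
Proof.
split; first exact: Dsm.
split; first by exists 1; split; [exact: D1|exact: oner_neq0].
exists 1; split; [exact: D1|split; [exact: oner_neq0|]] => x hx; by rewrite mul1r.
Qed.

Lemma prin1 : prin D 1 = D.
Proof.
apply: seteq => x.
  by move=> [d [hd ->]]; rewrite mulr1.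
by move=> hx; exists x; rewrite mulr1.
Qed.

Lemma prin_sm x : submodule D (prin D x).
Proof.
split; first by exists 0; split; [exact: D0| by rewrite mul0r].
split; first by move=> a b [d [hd ->]] [e [he ->]]; exists (d + e); split; [exact: Dadd|by rewrite mulrDl].
by move=> d a hd [e [he ->]]; exists (d * e); split; [exact: Dmul|by rewrite mulrA].
Qed.

Lemma prin_in x : prin D x x.
Proof. by exists 1; split; [exact: D1| rewrite mul1r]. Qed.

Lemma prin_frac x : x != 0 -> fractional D (prin D x).
Proof.
move=> hx; split; first exact: prin_sm.
split; first by exists x; split => //; exact: prin_in.
have [p [q [hp [hq [hq0 hxe]]]]] := qf x.
have hp0 : p != 0 by apply: contraNneq hx => hp0; rewrite hxe hp0 mul0r.
exists q; split => //; split => // y [e [he ->]].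
rewrite hxe; have -> : q * (e * (p / q)) = e * p by fld.
exact: Dmul.
Qed.


Lemma st_frac I : fractional D I -> fractional D (star I).
Proof. by case: HS => h _; exact: h. Qed.
Lemma st_prin x : x != 0 -> star (prin D x) = prin D x.
Proof. by case: HS => _ [h _]; exact: h. Qed.
Lemma st_mulset x I : x != 0 -> fractional D I -> star (mulset x I) = mulset x (star I).
Proof. by case: HS => _ [_ [h _]]; exact: h. Qed.
Lemma st_ext I : fractional D I -> subs I (star I).
Proof. by case: HS => _ [_ [_ [h _]]]; exact: h. Qed.
Lemma st_mono I J : fractional D I -> fractional D J -> subs I J -> subs (star I) (star J).
Proof. by case: HS => _ [_ [_ [_ [h _]]]]; exact: h. Qed.
Lemma st_idem I : fractional D I -> star (star I) = star I.
Proof. by case: HS => _ [_ [_ [_ [_ h]]]]; exact: h. Qed.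

Lemma starD : star D = D.
Proof. by rewrite -prin1 st_prin // oner_neq0. Qed.

Lemma st_int X : fractional D X -> subs X D -> subs (star X) D.
Proof. move=> hX hs; rewrite -starD; exact: st_mono Dfrac hs. Qed.

Lemma st_ideal X : fractional D X -> star_ideal D star (star X).
Proof. by move=> h; split; [exact: st_frac|exact: st_idem]. Qed.

Lemma Dideal : star_ideal D star D.
Proof. by split; [exact: Dfrac|exact: starD]. Qed.

Lemma frac_sm X : fractional D X -> submodule D X.
Proof. by case. Qed.

Lemma mulset_frac x I : x != 0 -> fractional D I -> fractional D (mulset x I).
Proof.
move=> hx [hsm [[y [hy hy0]] [d [hd [hd0 hb]]]]].
split.
  split; first by exists 0; split; [exact: sm0| by rewrite mulr0].
  split; first by move=> a b [z [hz ->]] [w [hw ->]]; exists (z + w); split; [exact: smadd|by rewrite mulrDr].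
  by move=> e a he [z [hz ->]]; exists (e * z); split; [exact: smmul|by rewrite mulrCA].
split; first by exists (x * y); split; [exists y| rewrite mulf_neq0].
have [p [q [hp [hq [hq0 hxe]]]]] := qf x.
exists (q * d); split; first exact: Dmul.
split; first by rewrite mulf_neq0.
move=> z [w [hw ->]]; rewrite hxe.
have -> : q * d * (p / q * w) = p * (d * w) by fld.
apply: Dmul => //; exact: hb.
Qed.

Lemma st_mulT u X T : fractional D X -> star_ideal D star T ->
  (forall y, X y -> T (u * y)) -> forall y, star X y -> T (u * y).
Proof.
move=> hX [hT hTT] h y hy.
have [->|hu] := eqVneq u 0.
  rewrite mul0r; apply: sm0; exact: frac_sm.
have hsub : subs (mulset u X) T by move=> z [w [hw ->]]; exact: h.
have := st_mono (mulset_frac hu hX) hT hsub; rewrite hTT st_mulset // => hs.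
apply: hs; by exists y.
Qed.

Lemma st_mulD u X : fractional D X ->
  (forall y, X y -> D (u * y)) -> forall y, star X y -> D (u * y).
Proof. move=> hX; exact: st_mulT Dideal. Qed.

Lemma iprod_frac I J : fractional D I -> fractional D J -> fractional D (iprod D I J).
Proof.
move=> [hI [[a [ha ha0]] [d1 [hd1 [hd10 hb1]]]]] [hJ [[b [hb hb0]] [d2 [hd2 [hd20 hb2]]]]].
split; first exact: gen_sm.
split; first by exists (a * b); split; [apply: gen_in; exists a, b| rewrite mulf_neq0].
exists (d1 * d2); split; first exact: Dmul.
split; first by rewrite mulf_neq0.
move=> x hx; apply: (gen_min (sm_mul _ Dsm)) hx => z [a' [b' [ha' [hb' ->]]]].
have -> : d1 * d2 * (a' * b') = (d1 * a') * (d2 * b') by ring.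
apply: Dmul; [exact: hb1|exact: hb2].
Qed.

Lemma iprod_in I J a b : I a -> J b -> iprod D I J (a * b).
Proof. by move=> ha hb; apply: gen_in; exists a, b. Qed.

Lemma iprod_int I J : subs I D -> subs J D -> subs (iprod D I J) D.
Proof.
move=> hI hJ x hx; apply: (gen_min Dsm) hx => z [a [b [ha [hb ->]]]]; apply: Dmul; auto.
Qed.

Lemma isum_sm I J : submodule D I -> submodule D J -> submodule D (isum I J).
Proof.
move=> hI hJ; split; first by exists 0, 0; split; [exact: sm0|split; [exact: sm0|by rewrite addr0]].
split.
  move=> x y [a [b [ha [hb ->]]]] [c [e [hc [he ->]]]].
  exists (a + c), (b + e); split; first exact: smadd.
  split; first exact: smadd. by ring.
move=> d x hd [a [b [ha [hb ->]]]]; exists (d * a), (d * b).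
split; first exact: smmul. split; first exact: smmul. by ring.
Qed.

Lemma isum_frac I J : fractional D I -> fractional D J -> fractional D (isum I J).
Proof.
move=> [hI [[a [ha ha0]] [d1 [hd1 [hd10 hb1]]]]] [hJ [_ [d2 [hd2 [hd20 hb2]]]]].
split; first exact: isum_sm.
split; first by exists a; split => //; exists a, 0; split => //; split; [exact: sm0| by rewrite addr0].
exists (d1 * d2); split; first exact: Dmul.
split; first by rewrite mulf_neq0.
move=> x [a' [b' [ha' [hb' ->]]]].
have -> : d1 * d2 * (a' + b') = d2 * (d1 * a') + d1 * (d2 * b') by ring.
apply: Dadd; apply: Dmul; auto.
Qed.

Lemma isum_l I J a : submodule D J -> I a -> isum I J a.
Proof. by move=> hJ ha; exists a, 0; split => //; split; [exact: sm0|rewrite addr0]. Qed.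
Lemma isum_r I J b : submodule D I -> J b -> isum I J b.
Proof. by move=> hI hb; exists 0, b; split; [exact: sm0|split => //; rewrite add0r]. Qed.

Lemma isum_int I J : subs I D -> subs J D -> subs (isum I J) D.
Proof. by move=> hI hJ x [a [b [ha [hb ->]]]]; apply: Dadd; auto. Qed.

Lemma iinv_frac I : fractional D I -> fractional D (Defs.iinv D I).
Proof.
move=> [hI [[a [ha ha0]] [d [hd [hd0 hb]]]]].
split.
  split; first by move=> y _; rewrite mul0r; exact: D0.
  split; first by move=> x y hx hy z hz; rewrite mulrDl; apply: Dadd; auto.
  by move=> e x he hx z hz; rewrite -mulrA; apply: Dmul; auto.
split; first by exists d; split => //.
have [p [q [hp [hq [hq0 hae]]]]] := qf a.
have hp0 : p != 0 by apply: contraNneq ha0 => hp0; rewrite hae hp0 mul0r.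
exists p; split => //; split => // x hx.
have -> : p * x = q * (x * a) by rewrite hae; field.
apply: Dmul => //; exact: hx.
Qed.

Lemma one_all X : submodule D X -> subs X D -> X 1 -> X = D.
Proof.
move=> hX hs h1; apply: seteq => // x hx.
by rewrite -[x]mulr1; exact: smmul.
Qed.


Lemma not1 X : submodule D X -> subs X D -> X <> D -> ~ X 1.
Proof. by move=> h1 h2 h3 h4; apply: h3; exact: one_all. Qed.

Definition primeI (P : kset K) := submodule D P /\ subs P D /\ ~ P 1 /\
  (forall a b, D a -> D b -> P (a * b) -> P a \/ P b).

Section Prime.
Variable P : kset K.
Hypothesis hP : primeI P.

Lemma pr_sm : submodule D P. Proof. by case: hP. Qed.
Lemma pr_int : subs P D. Proof. by case: hP => _ []. Qed.
Lemma pr_n1 : ~ P 1. Proof. by case: hP => _ [_ []]. Qed.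
Lemma pr_pr a b : D a -> D b -> P (a * b) -> P a \/ P b.
Proof. by case: hP => _ [_ [_ h]]; exact: h. Qed.
Lemma pr0 : P 0. Proof. exact: sm0 pr_sm. Qed.
Lemma pr_nz s : ~ P s -> s != 0.
Proof. by move=> h; apply/eqP => hs; apply: h; rewrite hs; exact: pr0. Qed.
Lemma pr_mulN s t : D s -> D t -> ~ P s -> ~ P t -> ~ P (s * t).
Proof. by move=> hs ht h1 h2 h; case: (pr_pr hs ht h). Qed.
Lemma Dexp y n : D y -> D (y ^+ n).
Proof.
move=> hy; elim: n => [|n IH]; first by rewrite expr0; exact: D1.
by rewrite exprS; exact: Dmul.
Qed.
Lemma pr_expN y n : D y -> ~ P y -> ~ P (y ^+ n).
Proof.
move=> hy hn; elim: n => [|n IH]; first by rewrite expr0; exact: pr_n1.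
rewrite exprS; apply: pr_mulN => //; exact: Dexp.
Qed.
Lemma pr_exp y n : D y -> P (y ^+ n.+1) -> P y.
Proof. by move=> hy h; apply: NNPP => hn; exact: (@pr_expN y n.+1 hy hn h). Qed.
Lemma pr_unit x : x != 0 -> D x^-1 -> P x -> False.
Proof.
move=> hx0 hxi h; apply: pr_n1.
rewrite -(mulVf hx0); exact: (smmul pr_sm hxi h).
Qed.

Notation loc := (localization D P).

Lemma loc_frac a s : D a -> D s -> ~ P s -> loc (a / s).
Proof. by move=> ha hs hn; exists a, s. Qed.
Lemma loc_D z : D z -> loc z.
Proof. by move=> hz; exists z, 1; split => //; split; [exact: D1|split; [exact: pr_n1|by rewrite divr1]]. Qed.
Lemma loc_inv s : D s -> ~ P s -> loc s^-1.
Proof. by move=> hs hn; rewrite -div1r; apply: loc_frac => //; exact: D1. Qed.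
Lemma loc_mul x y : loc x -> loc y -> loc (x * y).
Proof.
move=> [a [s [ha [hs [hn ->]]]]] [b [t [hb [ht [hnt ->]]]]].
have h0 := pr_nz hn; have h1 := pr_nz hnt.
have -> : a / s * (b / t) = (a * b) / (s * t) by fld.
apply: loc_frac; [exact: Dmul|exact: Dmul|exact: pr_mulN].
Qed.
Lemma loc_add x y : loc x -> loc y -> loc (x + y).
Proof.
move=> [a [s [ha [hs [hn ->]]]]] [b [t [hb [ht [hnt ->]]]]].
have h0 := pr_nz hn; have h1 := pr_nz hnt.
have -> : a / s + b / t = (a * t + b * s) / (s * t) by fld.
apply: loc_frac; [apply: Dadd; exact: Dmul|exact: Dmul|exact: pr_mulN].
Qed.
Lemma loc_exp x n : loc x -> loc (x ^+ n).
Proof.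
move=> hx; elim: n => [|n IH]; first by rewrite expr0; apply: loc_D; exact: D1.
by rewrite exprS; exact: loc_mul.
Qed.
Lemma loc_sm c : submodule D (fun y => loc (y / c)).
Proof.
split; first by rewrite mul0r; apply: loc_D; exact: D0.
split; first by move=> a b ha hb; rewrite mulrDl; exact: loc_add.
by move=> d a hd ha; rewrite -mulrA; apply: loc_mul => //; exact: loc_D.
Qed.

Lemma cd (s : seq K) (f : K -> K) : (forall e, e \in s -> loc (f e)) ->
  exists t, D t /\ ~ P t /\ forall e, e \in s -> D (t * f e).
Proof.
elim: s => [|a s IH] h.
  exists 1; split; first exact: D1. split; first exact: pr_n1. by move=> e; rewrite in_nil.
have [t [ht [hnt hts]]] : exists t, D t /\ ~ P t /\ forall e, e \in s -> D (t * f e).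
  by apply: IH => e he; apply: h; rewrite in_cons he orbT.
have [b [u [hb [hu [hnu hfa]]]]] : loc (f a) by apply: h; rewrite in_cons eqxx.
exists (u * t); split; first exact: Dmul.
split; first exact: pr_mulN.
move=> e; rewrite in_cons => /orP [/eqP ->|he].
  rewrite hfa; have h0 := pr_nz hnu.
  have -> : u * t * (b / u) = t * b by fld.
  exact: Dmul.
by rewrite -mulrA; apply: Dmul => //; exact: hts.
Qed.

Lemma cl c X : c != 0 -> fractional D X -> (forall x, X x -> loc (x / c)) ->
  forall y, star X y -> loc (y / c).
Proof.
move=> hc hX hXc y; rewrite (HF hX) => [[J [[s hJ] [hJ0 [hJX hy]]]]].
have hJf : fractional D J by apply: fin_gen_frac => //; exists s.
have [t [ht [hnt hts]]] := cd (f := fun e => e / c) (s := s)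
   (fun e he => hXc e (hJX e (eq_ind_r (fun J => J e) (gen_in he) hJ))).
have hu : forall z, J z -> D ((t / c) * z).
  move=> z; rewrite hJ => hz; apply: (gen_min (sm_mul _ Dsm)) hz => e he.
  by rewrite mulrAC -mulrA; exact: hts.
have := st_mulD hJf hu hy => hD.
have h0 := pr_nz hnt.
have -> : y / c = (t / c * y) / t by fld.
exact: loc_frac.
Qed.

End Prime.


Notation maxI := (maximal_star_ideal D star).

Lemma max_ideal P : maxI P -> star_ideal D star P. Proof. by case. Qed.
Lemma max_frac P : maxI P -> fractional D P. Proof. by case=> [[]]. Qed.
Lemma max_int P : maxI P -> subs P D. Proof. by case=> _ [[]]. Qed.
Lemma max_n1 P : maxI P -> ~ P 1.
Proof. move=> [[hf _] [[hd hne] _]]; apply: not1 => //; exact: frac_sm. Qed.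
Lemma max_max P Q : maxI P -> star_ideal D star Q -> subs Q D -> ~ Q 1 -> subs P Q -> Q = P.
Proof.
move=> [_ [_ h]] hQ hQD hQ1 hPQ; apply: h => //; split => // e; apply: hQ1; rewrite e; exact: D1.
Qed.

Lemma prin_int a : D a -> subs (prin D a) D.
Proof. by move=> ha y [d [hd ->]]; exact: Dmul. Qed.

Lemma max_prime P : maxI P -> primeI P.
Proof.
move=> hP; have hPf := max_frac hP; have hPD := max_int hP; have hP1 := max_n1 hP.
have hPs := frac_sm hPf.
split => //; split => //; split => // a b ha hb hab.
case: (classic (P a)) => hPa; first by left.
right; have [->|hb0] := eqVneq b 0; first exact: sm0.
have ha0 : a != 0 by apply/eqP => e; apply: hPa; rewrite e; exact: sm0.
pose X := isum P (prin D a).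
have hXf : fractional D X by apply: isum_frac => //; exact: prin_frac.
have hXD : subs X D by apply: isum_int => //; exact: prin_int.
have hX1 : star X 1.
  apply: NNPP => hn.
  have e : star X = P.
    apply: max_max => //; first exact: st_ideal.
      exact: st_int.
    move=> z hz; apply: st_ext => //; apply: isum_l => //; exact: prin_sm.
  apply: hPa; rewrite -e; apply: st_ext => //; apply: isum_r => //; exact: prin_in.
have := st_mulT (u := b) hXf (max_ideal hP) _ hX1; rewrite mulr1; apply.
move=> y [p [q [hp [[d [hd ->]] ->]]]].
rewrite mulrDr; apply: smadd => //; first exact: smmul.
have -> : b * (d * a) = d * (a * b) by ring.
exact: smmul.
Qed.

Section ZornPart.
Variable X : kset K.
Hypothesis hXf : fractional D X.
Hypothesis hXD : subs X D.
Hypothesis hX1 : ~ star X 1.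

Definition good (Y : kset K) := star_ideal D star Y /\ subs Y D /\ ~ Y 1 /\ subs X Y.
Definition T := {Y : kset K | good Y}.
Definition RR (a b : T) : bool := boolp.asbool (subs (sval a) (sval b)).

Lemma RRP a b : RR a b <-> subs (sval a) (sval b).
Proof. by split => [/boolp.asboolP|/boolp.asboolP]. Qed.

Lemma good0 : good (star X).
Proof.
split; first exact: st_ideal.
split; first exact: st_int.
split => //; exact: st_ext.
Qed.

Lemma chain_ub (A : classical_sets.set T) : classical_sets.total_on A (fun x y => RR x y) ->
  exists t, forall s, A s -> RR s t.
Proof.
move=> htot.
case: (classic (exists a, A a)) => [[a ha]|hn]; last first.
  by exists (exist _ _ good0) => s hs; exfalso; apply: hn; exists s.
pose U := fun z => exists Y, A Y /\ sval Y z.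
have hcomp : forall Y1 Y2, A Y1 -> A Y2 -> subs (sval Y1) (sval Y2) \/ subs (sval Y2) (sval Y1).
  move=> Y1 Y2 h1 h2; case: (htot _ _ h1 h2) => /RRP; tauto.
have hgY : forall Y : T, good (sval Y) by move=> [Y hY].
have hsmY : forall Y : T, submodule D (sval Y).
  by move=> Y; case: (hgY Y) => [[hf _] _]; exact: frac_sm.
have hUsm : submodule D U.
  split; first by exists a; split => //; exact: sm0.
  split.
    move=> z1 z2 [Y1 [h1 hz1]] [Y2 [h2 hz2]].
    case: (hcomp _ _ h1 h2) => hs.
      by exists Y2; split => //; apply: smadd => //; exact: hs.
    by exists Y1; split => //; apply: smadd => //; exact: hs.
  by move=> d z hd [Y [hY hz]]; exists Y; split => //; exact: smmul.
have hUD : subs U D by move=> z [Y [_ hz]]; case: (hgY Y) => _ [h _]; exact: h.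
have hXU : subs X U by move=> z hz; exists a; split => //; case: (hgY a) => _ [_ [_ h]]; exact: h.
have hUf : fractional D U.
  split => //; split.
    case: hXf => _ [[y [hy hy0]] _]; exists y; split => //; exact: hXU.
  exists 1; split; first exact: D1. split; first exact: oner_neq0.
  by move=> z hz; rewrite mul1r; exact: hUD.
have hfin : forall s : seq K, (forall e, e \in s -> U e) -> exists Y, A Y /\ forall e, e \in s -> sval Y e.
  elim=> [|e s IH] h.
    by exists a; split => // e; rewrite in_nil.
  have [Y1 [h1 hY1]] : U e by apply: h; rewrite in_cons eqxx.
  have [Y2 [h2 hY2]] : exists Y, A Y /\ forall e, e \in s -> sval Y e.
    by apply: IH => e' he'; apply: h; rewrite in_cons he' orbT.
  case: (hcomp _ _ h1 h2) => hs.
    exists Y2; split => // e'; rewrite in_cons => /orP [/eqP ->|he']; [exact: hs|exact: hY2].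
  exists Y1; split => // e'; rewrite in_cons => /orP [/eqP ->|he']; [done|apply: hs; exact: hY2].
have hU : good U.
  split.
    split => //; apply: seteq; last exact: st_ext.
    move=> y; rewrite (HF hUf) => [[J [[s hJ] [hJ0 [hJU hy]]]]].
    have [Y [hY hYs]] : exists Y, A Y /\ forall e, e \in s -> sval Y e.
      apply: hfin => e he; apply: hJU; rewrite hJ; exact: gen_in.
    have hJf : fractional D J by apply: fin_gen_frac => //; exists s.
    have [[hYf hYst] _] := hgY Y.
    have hJY : subs J (sval Y) by rewrite hJ; apply: gen_min => //; exact: hsmY.
    have := st_mono hJf hYf hJY; rewrite hYst => h.
    by exists Y; split => //; exact: h.
  split => //; split => // [[Y [hY h1]]].
  by case: (hgY Y) => _ [_ [h _]]; exact: h.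
by exists (exist _ U hU) => s hs; apply/RRP => z hz; exists s.
Qed.

Lemma to_max_aux : exists P, maxI P /\ subs X P.
Proof.
have r1 : forall s, RR s s by move=> s; apply/RRP.
have r2 : forall r s t, RR r s -> RR s t -> RR r t.
  by move=> r s t /RRP h1 /RRP h2; apply/RRP => z hz; exact/h2/h1.
have r3 : forall s t, RR s t -> RR t s -> s = t.
  move=> [a ha] [b hb] /RRP h1 /RRP h2.
  have e : a = b by apply: seteq.
  subst b; by rewrite (proof_irrelevance _ ha hb).
have [t ht] := @classical_sets.Zorn T RR r1 r2 r3 chain_ub.
move: t ht => [P [hPi [hPD [hP1 hXP]]]] ht.
exists P; split => //; split => //; split.
  split => // e; apply hP1; move: e => ->; exact: D1.
move=> Q hQ [hQD hQne] hPQ.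
have hQ1 : ~ Q 1 by apply: not1 => //; case: hQ => [hf _]; exact: frac_sm.
have hg : good Q by split => //; split => //; split => // z hz; exact/hPQ/hXP.
have := ht (exist _ Q hg) (proj2 (RRP (exist _ P (conj hPi (conj hPD (conj hP1 hXP)))) (exist _ Q hg)) hPQ).
by move=> e; have := f_equal (@sval _ _) e.
Qed.

End ZornPart.

Lemma to_max X : fractional D X -> subs X D -> ~ star X 1 -> exists P, maxI P /\ subs X P.
Proof. exact: to_max_aux. Qed.

Lemma inter z : (forall P, maxI P -> localization D P z) -> D z.
Proof.
move=> h; apply: NNPP => hz.
pose C := fun d => D d /\ D (z * d).
have [a [b [ha [hb [hb0 hze]]]]] := qf z.
have hCb : C b by split => //; rewrite hze; have -> : a / b * b = a by fld.
have hCsm : submodule D C.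
  split; first by split; [exact: D0|rewrite mulr0; exact: D0].
  split; first by move=> x y [h1 h2] [h3 h4]; split; [exact: Dadd|rewrite mulrDr; exact: Dadd].
  by move=> d x hd [h1 h2]; split; [exact: Dmul|rewrite mulrCA; exact: Dmul].
have hCf : fractional D C.
  split => //; split; first by exists b.
  exists 1; split; first exact: D1. split; first exact: oner_neq0.
  by move=> x [hx _]; rewrite mul1r.
have hC1 : ~ star C 1.
  move=> h1; apply: hz; rewrite -[z]mulr1; apply: (st_mulD hCf) h1.
  by move=> y [].
have [P [hP hCP]] := to_max hCf (fun x hx => proj1 hx) hC1.
have [a' [s [ha' [hs [hns hze']]]]] := h P hP.
have hs0 : s != 0 by exact: (@pr_nz P (max_prime hP) s hns).
apply hns; apply: hCP; split => //.
by rewrite hze'; have -> : a' / s * s = a' by fld.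
Qed.

Notation Fp ls := (foldr (iprod D) D ls).

Lemma foldr_frac (ls : seq (kset K)) : (forall I, List.In I ls -> fractional D I) -> fractional D (Fp ls).
Proof.
elim: ls => [|I ls IH] h /=; first exact: Dfrac.
apply: iprod_frac; first by apply: h; left.
by apply: IH => J hJ; apply: h; right.
Qed.

Lemma foldr_int (ls : seq (kset K)) : (forall I, List.In I ls -> subs I D) -> subs (Fp ls) D.
Proof.
elim: ls => [|I ls IH] h /=; first by [].
apply: iprod_int; first by apply: h; left.
by apply: IH => J hJ; apply: h; right.
Qed.

Lemma gens_sub s1 s2 : (forall e, e \in s1 -> e \in s2) -> subs (gens s1) (gens s2).
Proof. by move=> h; apply: gen_min; [exact: gen_sm| move=> e he; apply: gen_in; exact: h]. Qed.

Lemma gens_in s e : e \in s -> gens s e.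
Proof. by move=> h; exact: gen_in. Qed.

Notation SHI := (star_super_homog D star).

Lemma shi_frac I : SHI I -> fractional D I. Proof. by case=> [[]]. Qed.
Lemma shi_int I : SHI I -> subs I D. Proof. by case=> _ [_ [[]]]. Qed.

Lemma key_I I M d : SHI I -> maxI M -> D d -> d != 0 ->
  (exists h t r, h != 0 /\ I h /\ (forall z, I z -> localization D M (z / h)) /\
      D t /\ ~ M t /\ D r /\ t * d = h * r) \/
  (forall z, I z -> localization D M (z / d)).
Proof.
move=> [hIi [[J [[s hJ] [hJ0 hIJ]]] [[hID hIne] [hinv hsum]]]] hM hd hd0.
have hMp := max_prime hM.
have hMsm := pr_sm hMp.
have hgf : fractional D (gens (d :: s)).
  by apply: gens_frac; exists d; split => //; apply: gens_in; rewrite in_cons eqxx.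
pose B := star (gens (d :: s)).
have hBi : star_ideal D star B by exact: st_ideal.
have hJf : fractional D J by apply: fin_gen_frac => //; exists s.
have hIB : subs I B.
  rewrite hIJ; apply: st_mono => //; rewrite hJ; apply: gens_sub => e he.
  by rewrite in_cons he orbT.
have hBinv := hinv B hBi (ex_intro _ (gens (d :: s)) (conj (ex_intro _ (d :: s) erefl)
   (conj (ex_intro _ d (conj (gens_in (mem_head d s)) hd0)) erefl))) hIB.
case: hBinv => hBf hBst.
have [u [g [hu [hg hug]]]] : exists u g, Defs.iinv D B u /\ g \in d :: s /\ ~ M (u * g).
  apply: NNPP => hn.
  have hsub : subs (iprod D B (Defs.iinv D B)) M.
    apply: gen_min => // z [a [b [ha [hb ->]]]].
    rewrite mulrC; apply: (st_mulT (X := gens (d :: s)) hgf (max_ideal hM)) ha => y hy.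
    apply: (gen_min (sm_mul b hMsm)) hy => g hg.
    by apply: NNPP => hn'; apply: hn; exists b, g.
  have hif := iprod_frac hBf (iinv_frac hBf).
  have := st_mono hif (max_frac hM) hsub; rewrite hBst (proj2 (max_ideal hM)) => h.
  by apply: (max_n1 hM); apply: h; exact: D1.
have hug0 : u * g != 0 := pr_nz hMp hug.
have hu0 : u != 0 by apply: contraNneq hug0 => ->; rewrite mul0r.
have hg0 : g != 0 by apply: contraNneq hug0 => ->; rewrite mulr0.
have hgB : B g by apply: st_ext => //; exact: gens_in.
have hugD : D (u * g) by exact: hu.
have hBloc : forall z, B z -> localization D M (z / g).
  move=> z hz; have -> : z / g = (u * z) / (u * g) by fld.
  apply: loc_frac => //; exact: hu.
move: hg; rewrite in_cons => /orP [/eqP hgd|hgs].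
  right => z hz; rewrite -hgd; apply: hBloc; exact: hIB.
left; exists g, (u * g), (u * d); split => //; split.
  rewrite hIJ; apply: st_ext => //; rewrite hJ; exact: gens_in.
split; first by move=> z hz; apply: hBloc; exact: hIB.
split => //; split => //; split.
  by apply: hu; apply: st_ext => //; apply: gens_in; exact: mem_head.
by ring.
Qed.

Lemma Ploc M (ls : seq (kset K)) : maxI M -> (forall I, List.In I ls -> SHI I) ->
  forall d, D d -> (exists s, D s /\ ~ M s /\ Fp ls (s * d)) \/
                   (d != 0 /\ forall z, Fp ls z -> localization D M (z / d)).
Proof.
move=> hM; have hMp := max_prime hM.
elim: ls => [|I ls IH] hls d hd.
  left; exists 1; split; first exact: D1. split; first exact: (max_n1 hM).
  by rewrite mul1r.
have hls' : forall J, List.In J ls -> SHI J by move=> J hJ; apply: hls; right.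
have hI : SHI I by apply: hls; left.
have hF'D : subs (Fp ls) D by apply: foldr_int => J hJ; apply: shi_int; exact: hls' .
have [->|hd0] := eqVneq d 0.
  left; exists 1; split; first exact: D1. split; first exact: (max_n1 hM).
  rewrite mulr0; exact: sm0 (gen_sm _).
case: (key_I hI hM hd hd0) => [[h [t [r [hh0 [hIh [hIloc [ht [hnt [hr htd]]]]]]]]]|hIloc].
  case: (IH hls' r hr) => [[s [hs [hns hFs]]]|[hr0 hFloc]].
    left; exists (s * t); split; first exact: Dmul.
    split; first exact: (pr_mulN hMp).
    have -> : s * t * d = h * (s * r) by rewrite -mulrA htd; ring.
    exact: iprod_in.
  right; split => //.
  move=> z hz; apply: (gen_min (loc_sm hMp d)) hz => w [a [b [ha [hb ->]]]].
  have e : a * b / d = (a / h) * (b / r) * t.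
    have -> : t = h * r / d by rewrite -htd; fld.
    by fld.
  rewrite e; apply: (loc_mul hMp); last by apply: (loc_D hMp).
  by apply: (loc_mul hMp); [exact: hIloc|exact: hFloc].
right; split => //.
move=> z hz; apply: (gen_min (loc_sm hMp d)) hz => w [a [b [ha [hb ->]]]].
rewrite mulrAC; apply: (loc_mul hMp); first exact: hIloc.
by apply: (loc_D hMp) => //; exact: hF'D.
Qed.

Lemma val_SH M : star_super_SH D star -> maxI M -> valuation_domain (localization D M).
Proof.
move=> hSH hM z hz0; have hMp := max_prime hM.
have [a [b [ha [hb [hb0 hze]]]]] := qf z.
have ha0 : a != 0 by apply: contraNneq hz0 => e; rewrite hze e mul0r.
case: (classic (D b^-1)) => hbi.
  left; rewrite hze; apply: (loc_D hMp); exact: Dmul.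
have [ls [hls hbe]] := hSH b hb hb0 hbi.
have hFf : fractional D (Fp ls) by apply: foldr_frac => I hI; apply: shi_frac; exact: hls.
case: (Ploc hM hls ha) => [[s [hs [hns hFs]]]|[_ hFloc]].
  have : prin D b (s * a) by rewrite hbe; apply: st_ext.
  move=> [e [he hsa]]; left.
  have hs0 := pr_nz hMp hns.
  have ha' : a = e * b / s by rewrite -hsa; fld.
  have -> : z = e / s by rewrite hze ha'; fld.
  exact: loc_frac.
right.
have := cl hMp ha0 hFf hFloc (y := b); rewrite -/(star_product D star ls) -hbe => h.
have -> : z^-1 = b / a by rewrite hze invf_div.
apply: h; exact: prin_in.
Qed.

Lemma decomp_sum P Q (s : seq K) : (forall e, e \in s -> isum P Q e) ->
  exists sp sq : seq K, (forall e, e \in sp -> P e) /\ (forall e, e \in sq -> Q e) /\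
    (forall e, e \in s -> exists a b, a \in sp /\ b \in sq /\ e = a + b).
Proof.
elim: s => [|e s IH] h.
  by exists [::], [::]; split => //; split => // e; rewrite in_nil.
have [sp [sq [h1 [h2 h3]]]] : exists sp sq : seq K, (forall e, e \in sp -> P e) /\ (forall e, e \in sq -> Q e) /\
    (forall e, e \in s -> exists a b, a \in sp /\ b \in sq /\ e = a + b).
  by apply: IH => e' he'; apply: h; rewrite in_cons he' orbT.
have [a [b [ha [hb he]]]] : isum P Q e by apply: h; exact: mem_head.
exists (a :: sp), (b :: sq); split.
  by move=> x; rewrite in_cons => /orP [/eqP ->|hx]; [done|exact: h1].
split; first by move=> x; rewrite in_cons => /orP [/eqP ->|hx]; [done|exact: h2].
move=> x; rewrite in_cons => /orP [/eqP ->|hx].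
  by exists a, b; rewrite !mem_head.
have [a' [b' [ha' [hb' ->]]]] := h3 x hx.
by exists a', b'; rewrite !in_cons ha' hb' !orbT.
Qed.

Lemma uniq_max I P Q : SHI I -> maxI P -> maxI Q -> subs I P -> subs I Q -> P = Q.
Proof.
move=> hI hP hQ hIP hIQ; apply: NNPP => hne.
move: (hI) => [hIi [[J [[sI hJ] [hJ0 hIJ]]] [[hID hIne] [hinv hsum]]]].
have hPf := max_frac hP; have hQf := max_frac hQ.
have hPsm := frac_sm hPf; have hQsm := frac_sm hQf.
pose S := isum P Q.
have hSf : fractional D S by exact: isum_frac.
have hSD : subs S D by apply: isum_int; [exact: max_int|exact: max_int].
have hS1 : star S 1.
  apply: NNPP => hn.
  have e : star S = P.
    apply: max_max => //; first exact: st_ideal. exact: st_int.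
    by move=> z hz; apply: st_ext => //; exact: isum_l.
  apply: hne; apply: max_max => //; first exact: max_ideal.
  - exact: max_int.
  - exact: max_n1.
  by move=> z hz; rewrite -e; apply: st_ext => //; exact: isum_r.
move: hS1; rewrite (HF hSf) => [[J1 [[s hJ1] [hJ10 [hJ1S hJ11]]]]].
have [sp [sq [hsp [hsq hs]]]] := decomp_sum (s := s) (fun e he => hJ1S e (eq_ind_r (fun J => J e) (gens_in he) hJ1)).
have hJf : fractional D J by apply: fin_gen_frac => //; exists sI.
have hgI : subs (gens sI) I by move=> z hz; rewrite hIJ; apply: (st_ext hJf); rewrite hJ; exact: hz.
have mk : forall (R : kset K) (sr : seq K), maxI R -> subs I R -> (forall e, e \in sr -> R e) ->
   star_ideal D star (star (gens (sI ++ sr))) /\ finite_type D star (star (gens (sI ++ sr))) /\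
   proper_integral D (star (gens (sI ++ sr))) /\ subs I (star (gens (sI ++ sr))) /\
   subs (gens sr) (star (gens (sI ++ sr))) /\ subs (star (gens (sI ++ sr))) R.
  move=> R sr hR hIR hsr.
  have hsub : subs (gens sI) (gens (sI ++ sr)) by apply: gens_sub => e he; rewrite mem_cat he.
  have hnz : exists y, gens (sI ++ sr) y /\ y != 0.
    by move: hJ0 => [y [hy hy0]]; exists y; split => //; apply: hsub; move: hy; rewrite hJ.
  have hf : fractional D (gens (sI ++ sr)) by exact: gens_frac.
  have hRsm : submodule D R by apply: frac_sm; exact: max_frac.
  have hgR : subs (gens (sI ++ sr)) R.
    apply: gen_min => // e; rewrite mem_cat => /orP [he|he]; last exact: hsr.
    by apply: hIR; apply: hgI; exact: gens_in.
  have hAR : subs (star (gens (sI ++ sr))) R.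
    have := st_mono hf (max_frac hR) hgR; by rewrite (proj2 (max_ideal hR)).
  split; first exact: st_ideal.
  split; first by exists (gens (sI ++ sr)); split; [exists (sI ++ sr)|split].
  split.
    split; first by move=> z hz; apply: (max_int hR); exact: hAR.
    by move=> e; apply: (max_n1 hR); apply: hAR; rewrite e; exact: D1.
  split.
    rewrite hIJ; apply: st_mono => //; rewrite hJ; exact: hsub.
  split => //.
  move=> z hz; apply: st_ext => //; move: z hz; apply: gens_sub => e he; by rewrite mem_cat he orbT.
have [hAi [hAft [hApi [hIA [hspA hAP]]]]] := mk P sp hP hIP hsp.
have [hBi [hBft [hBpi [hIB [hsqB hBQ]]]]] := mk Q sq hQ hIQ hsq.
apply: (hsum _ _ hAi hAft hApi hIA hBi hBft hBpi hIB).
have hABf : fractional D (isum (star (gens (sI ++ sp))) (star (gens (sI ++ sq)))).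
  by apply: isum_frac; [case: hAi|case: hBi].
have hABD : subs (isum (star (gens (sI ++ sp))) (star (gens (sI ++ sq)))) D.
  by apply: isum_int; [case: hApi|case: hBpi].
apply: one_all.
- exact: (frac_sm (st_frac hABf)).
- exact: st_int.
have hJ1f : fractional D J1 by apply: fin_gen_frac => //; exists s.
apply: (st_mono hJ1f hABf) hJ11.
rewrite hJ1; apply: gen_min; first by apply: isum_sm; [case: hAi => [[]]|case: hBi => [[]]].
move=> e he; have [a [b [ha [hb ->]]]] := hs e he.
exists a, b; split; first by apply: hspA; exact: gens_in.
by split => //; apply: hsqB; exact: gens_in.
Qed.

Lemma pr_prod R (ls : seq (kset K)) : primeI R -> (forall I, List.In I ls -> subs I D) ->
  subs (Fp ls) R -> exists I, List.In I ls /\ subs I R.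
Proof.
move=> hR; elim: ls => [|I ls IH] hls /= hF.
  by exfalso; apply: (pr_n1 hR); apply: hF; exact: D1.
case: (classic (subs I R)) => hIR; first by exists I; split => //; left.
have [a [ha hna]] : exists a, I a /\ ~ R a.
  by apply: NNPP => hn; apply: hIR => a ha; apply: NNPP => hna; apply: hn; exists a.
have [J [hJ hJR]] : exists J, List.In J ls /\ subs J R.
  apply: IH; first by move=> J hJ; apply: hls; right.
  move=> b hb; have hab : R (a * b) by apply: hF; exact: iprod_in.
  have haD : D a by exact: (hls I (or_introl erefl) a ha).
  have hbD : D b by apply: (foldr_int (ls := ls)) hb => J hJ; apply: hls; right.
  by case: (pr_pr hR haD hbD hab).
by exists J; split => //; right.
Qed.

Lemma max_list (ls : seq (kset K)) : (forall I, List.In I ls -> SHI I) ->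
  exists L : seq (kset K), forall P, maxI P -> (exists I, List.In I ls /\ subs I P) -> List.In P L.
Proof.
elim: ls => [|I ls IH] hls.
  by exists [::] => P _ [I [[] _]].
have [L hL] : exists L : seq (kset K), forall P, maxI P -> (exists I, List.In I ls /\ subs I P) -> List.In P L.
  by apply: IH => J hJ; apply: hls; right.
case: (classic (exists P0, maxI P0 /\ subs I P0)) => [[P0 [hP0 hIP0]]|hn].
  exists (P0 :: L) => P hP [J [[<-|hJ] hJP]].
    by left; apply: (uniq_max (hls _ (or_introl erefl))).
  by right; apply: hL => //; exists J.
exists L => P hP [J [[<-|hJ] hJP]].
  by exfalso; apply: hn; exists P.
by apply: hL => //; exists J.
Qed.

Lemma dirA : star_super_SH D star -> star_IRKT D star.
Proof.
move=> hSH; split; first by move=> P hP; exact: val_SH.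
split.
  move=> x; split; first by move=> hx P hP; exact: (loc_D (max_prime hP)).
  exact: inter.
split.
  move=> x hx hx0.
  case: (classic (D x^-1)) => hxi.
    by exists [::] => P hP hPx; exfalso; exact: (pr_unit (max_prime hP) hx0 hxi hPx).
  have [ls [hls hxe]] := hSH x hx hx0 hxi.
  have [L hL] := max_list hls.
  exists L => P hP hPx; apply: hL => //.
  apply: (pr_prod (max_prime hP)); first by move=> I hI; apply: shi_int; exact: hls.
  have hFf : fractional D (Fp ls) by apply: foldr_frac => I hI; apply: shi_frac; exact: hls.
  move=> z hz; have : prin D x z by rewrite hxe; apply: st_ext.
  move=> [d [hd ->]]; apply: smmul => //; [exact: (pr_sm (max_prime hP))].
move=> P Q R hP hQ hPQ [hRsm [[hRD hRne] [[x [hx hx0]] hRpr]]] hRP hRQ.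
have hRp : primeI R by split => //; split => //; split => //; exact: not1.
have hxD : D x by exact: hRD.
case: (classic (D x^-1)) => hxi.
  exact: (pr_unit hRp hx0 hxi hx).
have [ls [hls hxe]] := hSH x hxD hx0 hxi.
have hFf : fractional D (Fp ls) by apply: foldr_frac => I hI; apply: shi_frac; exact: hls.
have [I [hI hIR]] : exists I, List.In I ls /\ subs I R.
  apply: (pr_prod hRp); first by move=> I hI; apply: shi_int; exact: hls.
  move=> z hz; have : prin D x z by rewrite hxe; apply: st_ext.
  by move=> [d [hd ->]]; apply: smmul.
apply: hPQ; apply: (uniq_max (I := I)) => //; first exact: hls.
- by move=> z hz; apply: hRP; exact: hIR.
- by move=> z hz; apply: hRQ; exact: hIR.
Qed.

Lemma gens_zero (s : seq K) y : (forall e, e \in s -> e = 0) -> gens s y -> y = 0.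
Proof.
move=> h hy; apply: (gen_min (S := fun z => z = 0)) hy => //.
split => //; split; first by move=> a b -> ->; rewrite addr0.
by move=> d a _ ->; rewrite mulr0.
Qed.

Lemma min_elt P (s : seq K) : primeI P -> valuation_domain (localization D P) ->
  (exists y, y \in s /\ y != 0) ->
  exists k, k \in s /\ k != 0 /\ forall j, j \in s -> localization D P (j / k).
Proof.
move=> hP hV; elim: s => [|a s IH] [y [hy hy0]]; first by rewrite in_nil in hy.
case: (classic (exists y, y \in s /\ y != 0)) => hs.
  have [k [hk [hk0 hks]]] := IH hs.
  have [->|ha0] := eqVneq a 0.
    exists k; split; first by rewrite in_cons hk orbT.
    split => // j; rewrite in_cons => /orP [/eqP ->|hj]; last exact: hks.
    by rewrite mul0r; apply: (loc_D hP); exact: D0.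
  have hak : a / k != 0 by rewrite mulf_neq0 // invr_neq0.
  case: (hV _ hak) => hl.
    exists k; split; first by rewrite in_cons hk orbT.
    by split => // j; rewrite in_cons => /orP [/eqP ->|hj]; [done|exact: hks].
  exists a; split; first exact: mem_head.
  split => // j; rewrite in_cons => /orP [/eqP ->|hj].
    by rewrite divff //; apply: (loc_D hP); exact: D1.
  have -> : j / a = (j / k) * (a / k)^-1 by fld.
  by apply: (loc_mul hP) => //; exact: hks.
have ha0 : a != 0.
  move: hy; rewrite in_cons => /orP [/eqP <-|hy'] //.
  by exfalso; apply: hs; exists y.
exists a; split; first exact: mem_head.
split => // j; rewrite in_cons => /orP [/eqP ->|hj].
  by rewrite divff //; apply: (loc_D hP); exact: D1.
have -> : j = 0 by apply: NNPP => hj0; apply: hs; exists j; split => //; apply/eqP.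
by rewrite mul0r; apply: (loc_D hP); exact: D0.
Qed.

Lemma inv_ft J : star_IRKT D star -> star_ideal D star J -> finite_type D star J -> star_invertible D star J.
Proof.
move=> [hV _] [hJf hJst] [G [[s hG] [hG0 hJe]]].
have hGf : fractional D G by apply: fin_gen_frac => //; exists s.
split => //.
pose X := iprod D J (Defs.iinv D J).
have hXf : fractional D X by apply: iprod_frac => //; exact: iinv_frac.
have hXD : subs X D.
  by move=> z hz; apply: (gen_min Dsm) hz => w [a [b [ha [hb ->]]]]; rewrite mulrC; exact: hb.
apply: one_all; [exact: frac_sm (st_frac hXf)|exact: st_int|].
apply: NNPP => hX1.
have [P [hP hXP]] := to_max hXf hXD hX1.
have hPp := max_prime hP.
have hs : exists y, y \in s /\ y != 0.
  apply: NNPP => hn; move: hG0 => [y [hy hy0]]; apply: (negP hy0); apply/eqP.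
  apply: (gens_zero (s := s)); last by rewrite /gens -hG.
  by move=> e he; apply: NNPP => he0; apply: hn; exists e; split => //; apply/eqP.
have [k [hk [hk0 hks]]] := min_elt hPp (hV P hP) hs.
have [t [ht [hnt hts]]] := cd hPp (f := fun j => j / k) hks.
have hu : Defs.iinv D J (t / k).
  move=> y; rewrite hJe => hy; apply: (st_mulD hGf) hy => z; rewrite hG => hz.
  apply: (gen_min (sm_mul _ Dsm)) hz => e he.
  by rewrite mulrAC -mulrA; exact: hts.
have hkJ : J k by rewrite hJe; apply: (st_ext hGf); rewrite hG; exact: gens_in.
apply: hnt; have -> : t = k * (t / k) by fld.
by apply: hXP; exact: iprod_in.
Qed.

Lemma y_exists P Q x : star_IRKT D star -> maxI P -> maxI Q -> P <> Q -> D x -> x != 0 -> P x -> Q x ->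
  exists y, D y /\ localization D Q (y / x) /\ ~ P y.
Proof.
move=> [hV [_ [_ hind]]] hP hQ hPQ hx hx0 hPx hQx.
apply: NNPP => hn.
have H : forall y, D y -> localization D Q (y / x) -> P y.
  by move=> y hy hl; apply: NNPP => hny; apply: hn; exists y.
have hPp := max_prime hP; have hQp := max_prime hQ.
have hVQ := hV Q hQ.
pose R := fun y => D y /\ exists n, localization D Q (y ^+ n.+1 / x).
have hRQ : subs R Q.
  move=> y [hy [n [a [s [ha [hs [hns he]]]]]]].
  have hs0 := pr_nz hQp hns.
  have e : s * y ^+ n.+1 = a * x.
    have -> : y ^+ n.+1 = (y ^+ n.+1 / x) * x by fld.
    rewrite he; fld.
  have : Q (s * y ^+ n.+1) by rewrite e; apply: smmul (pr_sm hQp) ha hQx.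
  case/(pr_pr hQp hs (Dexp _ hy)) => // h.
  exact: (pr_exp hQp hy h).
have hRP : subs R P.
  move=> y [hy [n hl]]; apply: (pr_exp hPp hy); exact: (H _ (Dexp n.+1 hy) hl).
have l1 : localization D Q 1 by apply: (loc_D hQp); exact: D1.
have l0 : localization D Q 0 by apply: (loc_D hQp); exact: D0.
have hRx : R x by split => //; exists 0%N; rewrite expr1 divff.
have hR0 : R 0 by split; [exact: D0|exists 0%N; rewrite expr1 mul0r].
have hRsm : submodule D R.
  split => //; split.
    move=> a b [ha [n hna]] [hb [m hmb]]; split; first exact: Dadd.
    have [->|ha0] := eqVneq a 0; first by rewrite add0r; exists m.
    have [->|hb0] := eqVneq b 0; first by rewrite addr0; exists n.
    have hab0 : a / b != 0 by rewrite mulf_neq0 // invr_neq0.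
    case: (hVQ _ hab0) => hl.
      exists m; have -> : (a + b) ^+ m.+1 / x = (1 + a / b) ^+ m.+1 * (b ^+ m.+1 / x).
        by rewrite mulrA -exprMn; congr (_ ^+ _ / _); fld.
      apply: (loc_mul hQp) => //; apply: (loc_exp hQp); exact: (loc_add hQp).
    exists n; have -> : (a + b) ^+ n.+1 / x = (1 + (a / b)^-1) ^+ n.+1 * (a ^+ n.+1 / x).
      by rewrite mulrA -exprMn; congr (_ ^+ _ / _); fld.
    apply: (loc_mul hQp) => //; apply: (loc_exp hQp); exact: (loc_add hQp).
  move=> d a hd [ha [n hna]]; split; first exact: Dmul.
  exists n; rewrite exprMn -mulrA; apply: (loc_mul hQp) => //.
  by apply: (loc_D hQp); exact: Dexp.
apply: (hind P Q R hP hQ hPQ) => //.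
split => //; split.
  split; first by move=> y [].
  by move=> e; apply: (pr_n1 hQp); apply: hRQ; rewrite e; exact: D1.
split; first by exists x.
move=> a b ha hb [_ [n hnab]].
have [->|ha0] := eqVneq a 0; first by left.
have [->|hb0] := eqVneq b 0; first by right.
have hab0 : a / b != 0 by rewrite mulf_neq0 // invr_neq0.
case: (hVQ _ hab0) => hl.
  left; split => //; exists (n.+1 + n)%N.
  have e1 : a ^+ (n.+1 + n).+1 = (a * b) ^+ n.+1 * (a / b) ^+ n.+1.
    by rewrite -addnS exprD -!exprMn; congr (_ ^+ _); fld.
  have -> : a ^+ (n.+1 + n).+1 / x = ((a * b) ^+ n.+1 / x) * (a / b) ^+ n.+1.
    by rewrite e1 mulrAC.
  by apply: (loc_mul hQp) => //; exact: (loc_exp hQp).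
right; split => //; exists (n.+1 + n)%N.
have e1 : b ^+ (n.+1 + n).+1 = (a * b) ^+ n.+1 * (a / b)^-1 ^+ n.+1.
  by rewrite -addnS exprD -!exprMn; congr (_ ^+ _); fld.
have -> : b ^+ (n.+1 + n).+1 / x = ((a * b) ^+ n.+1 / x) * (a / b)^-1 ^+ n.+1.
  by rewrite e1 mulrAC.
by apply: (loc_mul hQp) => //; exact: (loc_exp hQp).
Qed.

Lemma filt (L : seq (kset K)) (Pr : kset K -> Prop) :
  exists L', List.NoDup L' /\ forall P, List.In P L' <-> (List.In P L /\ Pr P).
Proof.
elim: L => [|a L [L1 [hnd hL1]]].
  by exists [::]; split; [constructor|move=> P; split => [[]|[[] _]]].
case: (classic (Pr a /\ ~ List.In a L1)) => [[hpa hna]|hn].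
  exists (a :: L1); split; first by constructor.
  move=> P; split.
    move=> [<-|hP]; first by split => //; left.
    by have [h1 h2] := proj1 (hL1 P) hP; split => //; right.
  move=> [[<-|hP] hPr]; [by left|by right; apply/hL1].
exists L1; split => // P; split.
  by move=> hP; have [h1 h2] := proj1 (hL1 P) hP; split => //; right.
move=> [[<-|hP] hPr]; last by apply/hL1.
by apply: NNPP => hn'; apply: hn; split.
Qed.

Lemma in_map_K (L : seq (kset K)) (f : kset K -> K) e : e \in map f L -> exists P, List.In P L /\ e = f P.
Proof.
elim: L => [|a L IH] //=; rewrite in_cons => /orP [/eqP ->|h]; first by exists a; split => //; left.
by have [P [hP ->]] := IH h; exists P; split => //; right.
Qed.

Lemma map_in_K (L : seq (kset K)) (f : kset K -> K) P : List.In P L -> f P \in map f L.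
Proof.
elim: L => [|a L IH] //= [->|h]; first exact: mem_head.
by rewrite in_cons IH // orbT.
Qed.

Lemma In_map (L : seq (kset K)) (f : kset K -> kset K) I : List.In I (map f L) -> exists P, List.In P L /\ I = f P.
Proof.
elim: L => [|a L IH] //= [<-|h]; first by exists a; split => //; left.
by have [P [hP ->]] := IH h; exists P; split => //; right.
Qed.

Lemma loc_in Q x e : primeI Q -> x != 0 -> D e -> Q x -> localization D Q (e / x) -> Q e.
Proof.
move=> hQ hx0 he hQx [a [s [ha [hs [hns hl]]]]].
have hs0 := pr_nz hQ hns.
have e1 : s * e = a * x.
  have -> : e = (e / x) * x by fld.
  rewrite hl; fld.
have : Q (s * e) by rewrite e1; exact: smmul (pr_sm hQ) ha hQx.
by case/(pr_pr hQ hs he).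
Qed.

Lemma prod_elt (Ii : kset K -> kset K) (L : seq (kset K)) (f : kset K -> K) :
  (forall Q, List.In Q L -> Ii Q (f Q)) -> Fp (map Ii L) (foldr (fun Q acc => f Q * acc) 1 L).
Proof.
elim: L => [|a L IH] h /=; first exact: D1.
apply: iprod_in; first by apply: h; left.
by apply: IH => Q hQ; apply: h; right.
Qed.

Lemma prod_const (L : seq (kset K)) (x : K) : foldr (fun Q acc => x * acc) 1 L = x ^+ size L.
Proof. by elim: L => [|a L IH] /=; [rewrite expr0|rewrite IH exprS]. Qed.

Lemma dirB : star_IRKT D star -> star_super_SH D star.
Proof.
move=> hI; move: (hI) => [hV [hint [hlf hind]]].
move=> x hx hx0 hxi.
have [L hL] := hlf x hx hx0.
have [L' [hnd hL']] := filt L (fun P => maxI P /\ P x).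
have hin : forall P, List.In P L' <-> (maxI P /\ P x).
  move=> P; split; first by move=> h; have := proj1 (hL' P) h; tauto.
  by move=> [hP hPx]; apply/hL'; split => //; exact: hL.
have [Q0 [rest hL'e]] : exists Q0 rest, L' = Q0 :: rest.
  case: L' hnd hL' hin => [|Q0 rest] _ _ hin; last by exists Q0, rest.
  exfalso; apply: hxi; apply/hint => P hP.
  apply: loc_inv => // hPx.
  by have := proj2 (hin P) (conj hP hPx).
pose good_y Q P y := D y /\ localization D Q (y / x) /\ (P <> Q -> ~ P y).
pose yf Q P := epsilon (inhabits 0) (good_y Q P).
have hyf : forall Q P, List.In Q L' -> List.In P L' -> good_y Q P (yf Q P).
  move=> Q P hQ hP; apply: epsilon_spec.
  have [hQm hQx] := proj1 (hin Q) hQ; have [hPm hPx] := proj1 (hin P) hP.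
  case: (classic (P = Q)) => [e|hne].
    exists x; split => //; split => //; rewrite divff //; apply: (loc_D (max_prime hQm)); exact: D1.
  have [y [hy [hly hny]]] := y_exists hI hPm hQm hne hx hx0 hPx hQx.
  by exists y.
pose gl Q := x :: map (yf Q) L'.
pose Ii Q := star (gens (gl Q)).
have hgl : forall Q e, List.In Q L' -> e \in gl Q -> D e /\ localization D Q (e / x).
  move=> Q e hQ; rewrite in_cons => /orP [/eqP ->|he].
    split => //; rewrite divff //; apply: (loc_D (max_prime (proj1 (proj1 (hin Q) hQ)))); exact: D1.
  have [P [hP ->]] := in_map_K he.
  by have [h1 [h2 _]] := hyf Q P hQ hP.
have hglf : forall Q, fractional D (gens (gl Q)).
  by move=> Q; apply: gens_frac; exists x; split => //; apply: gens_in; exact: mem_head.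
have hIiQ : forall Q, List.In Q L' -> subs (Ii Q) Q.
  move=> Q hQ; have [hQm hQx] := proj1 (hin Q) hQ.
  have hQp := max_prime hQm.
  have : subs (gens (gl Q)) Q.
    apply: gen_min; first exact: (pr_sm hQp).
    move=> e he; have [h1 h2] := hgl Q e hQ he; exact: (loc_in hQp hx0 h1 hQx h2).
  move=> h; have := st_mono (hglf Q) (max_frac hQm) h.
  by rewrite (proj2 (max_ideal hQm)).
have hxI : forall Q, Ii Q x by move=> Q; apply: (st_ext (hglf Q)); apply: gens_in; exact: mem_head.
have hyI : forall Q P, List.In P L' -> Ii Q (yf Q P).
  move=> Q P hP; apply: (st_ext (hglf Q)); apply: gens_in; rewrite in_cons; apply/orP; right.
  exact: map_in_K.
have hinQ : forall Q A, List.In Q L' -> star_ideal D star A -> proper_integral D A -> subs (Ii Q) A -> subs A Q.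
  move=> Q A hQ [hAf hAst] [hAD hAne] hIA.
  have hA1 : ~ star A 1 by rewrite hAst; apply: not1 => //; exact: frac_sm.
  have [PA [hPA hAPA]] := to_max hAf hAD hA1.
  have hPAL : List.In PA L' by apply/hin; split => //; apply: hAPA; apply: hIA; exact: hxI.
  case: (classic (PA = Q)) => [<-|hne] //.
  exfalso; have [_ [_ hn]] := hyf Q PA hQ hPAL.
  by apply: (hn hne); apply: hAPA; apply: hIA; exact: hyI.
have hSH : forall Q, List.In Q L' -> SHI (Ii Q).
  move=> Q hQ; have [hQm hQx] := proj1 (hin Q) hQ.
  have hIi : star_ideal D star (Ii Q) by exact: st_ideal.
  split => //; split.
    exists (gens (gl Q)); split; first by exists (gl Q).
    split => //; exists x; split => //; apply: gens_in; exact: mem_head.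
  split.
    split; first by move=> z hz; apply: (max_int hQm); exact: hIiQ.
    by move=> e; apply: (max_n1 hQm); apply: (hIiQ Q hQ); rewrite e; exact: D1.
  split; first by move=> J hJ hJft _; exact: inv_ft.
  move=> A B hAi hAft hApi hIA hBi hBft hBpi hIB e.
  have hAQ := hinQ Q A hQ hAi hApi hIA.
  have hBQ := hinQ Q B hQ hBi hBpi hIB.
  have hABf : fractional D (isum A B) by apply: isum_frac; [case: hAi|case: hBi].
  have hsub : subs (isum A B) Q.
    move=> z [a [b [ha [hb ->]]]]; apply: smadd; [exact: (frac_sm (max_frac hQm))|exact: hAQ|exact: hBQ].
  have := st_mono hABf (max_frac hQm) hsub; rewrite e (proj2 (max_ideal hQm)) => h.
  by apply: (max_n1 hQm); apply: h; exact: D1.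
exists (map Ii L'); split.
  by move=> I hIn; have [Q [hQ ->]] := In_map hIn; exact: hSH.
have hIiD : forall Q, List.In Q L' -> subs (Ii Q) D by move=> Q hQ; exact: shi_int (hSH Q hQ).
have hFf : fractional D (Fp (map Ii L')).
  apply: foldr_frac => I hIn; have [Q [hQ ->]] := In_map hIn; exact: (shi_frac (hSH Q hQ)).
have foldW : forall P, maxI P -> forall L2, List.NoDup L2 -> (forall Q, List.In Q L2 -> List.In Q L') ->
   (List.In P L2 -> forall z, Fp (map Ii L2) z -> localization D P (z / x)) /\
   (~ List.In P L2 -> forall z, Fp (map Ii L2) z -> localization D P (z / 1)).
  move=> P hP; have hPp := max_prime hP.
  have iW : forall c c' A B, c != 0 -> c' != 0 -> (forall z, A z -> localization D P (z / c)) ->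
     (forall z, B z -> localization D P (z / c')) -> forall z, iprod D A B z -> localization D P (z / (c * c')).
    move=> c c' A B hc hc' hA hB z hz; apply: (gen_min (loc_sm hPp _)) hz => w [a [b [ha [hb ->]]]].
    have -> : a * b / (c * c') = (a / c) * (b / c') by fld.
    apply: (loc_mul hPp); [exact: hA|exact: hB].
  have W1 : forall Q, List.In Q L' -> forall z, Ii Q z -> localization D P (z / 1).
    by move=> Q hQ z hz; rewrite divr1; apply: (loc_D hPp); exact: (hIiD Q hQ z hz).
  have WP : List.In P L' -> forall z, Ii P z -> localization D P (z / x).
    move=> hPL; apply: (cl hPp hx0 (hglf P)) => z hz.
    apply: (gen_min (loc_sm hPp x)) hz => e he; exact: (proj2 (hgl P e hPL he)).
  elim=> [|Q L2 IH] hnd2 hsub2.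
    split; first by [].
    by move=> _ z hz; rewrite divr1; exact: (loc_D hPp).
  have [hnQ hnd2'] : ~ List.In Q L2 /\ List.NoDup L2 by inversion hnd2.
  have hsub2' : forall Q, List.In Q L2 -> List.In Q L' by move=> Q' h; apply: hsub2; right.
  have hQL : List.In Q L' by apply: hsub2; left.
  have [IH1 IH2] := IH hnd2' hsub2'.
  split.
    move=> [eQ|hPL2].
      subst Q; have := iW _ _ _ _ hx0 (oner_neq0 _) (WP hQL) (IH2 hnQ).
      by rewrite mulr1.
    have := iW _ _ _ _ (oner_neq0 _) hx0 (W1 Q hQL) (IH1 hPL2).
    by rewrite mul1r.
  move=> hnP.
  have hnP2 : ~ List.In P L2 by move=> h; apply: hnP; right.
  have := iW _ _ _ _ (oner_neq0 _) (oner_neq0 _) (W1 Q hQL) (IH2 hnP2).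
  by rewrite mulr1.
have hsub1 : subs (star (Fp (map Ii L'))) (prin D x).
  move=> z hz.
  have hzx : D (z / x).
    apply: inter => P hP; have hPp := max_prime hP.
    have [W1 W2] := foldW P hP L' hnd (fun Q h => h).
    case: (classic (List.In P L')) => hPL.
      exact: (cl hPp hx0 hFf (W1 hPL) hz).
    have hnPx : ~ P x by move=> hPx; apply: hPL; apply/hin.
    have := cl hPp (oner_neq0 _) hFf (W2 hPL) hz; rewrite divr1 => hl.
    apply: (loc_mul hPp) => //; exact: loc_inv.
  by exists (z / x); split => //; fld.
have hxF : star (Fp (map Ii L')) x.
  apply: NNPP => hnx.
  pose Y := mulset x^-1 (Fp (map Ii L')).
  have hxi0 : x^-1 != 0 by rewrite invr_neq0.
  have hYf := mulset_frac hxi0 hFf.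
  have hYD : subs Y D.
    move=> w [z [hz ->]]; have [d [hd ->]] := hsub1 z (st_ext hFf hz).
    by have -> : x^-1 * (d * x) = d by fld.
  have hY1 : ~ star Y 1.
    rewrite st_mulset // => [[z [hz e]]]; apply: hnx.
    have -> : x = z by have := f_equal (fun w => x * w) e; rewrite mulr1 => ->; fld.
    exact: hz.
  have [P [hP hYP]] := to_max hYf hYD hY1.
  have hPp := max_prime hP.
  have hPw : forall w, Fp (map Ii L') w -> P (x^-1 * w) by move=> w hw; apply: hYP; exists w.
  case: (classic (List.In P L')) => hPL.
    pose f := fun Q => if excluded_middle_informative (Q = P) then x else yf Q P.
    have hfI : forall Q, List.In Q L' -> Ii Q (f Q).
      move=> Q hQ; rewrite /f; destruct (excluded_middle_informative (Q = P)); [exact: hxI|exact: hyI].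
    have fP : f P = x by rewrite /f; destruct (excluded_middle_informative (P = P)).
    have hfQ : forall Q, List.In Q L' -> Q <> P -> D (f Q) /\ ~ P (f Q).
      move=> Q hQL hne; rewrite /f; destruct (excluded_middle_informative (Q = P)) as [e|hne2]; first by exfalso.
      have [h1 [_ h3]] := hyf Q P hQL hPL; split => //; apply: h3 => e; by apply: hne.
    have prodL : forall L2, List.NoDup L2 -> (forall Q, List.In Q L2 -> List.In Q L') ->
        (List.In P L2 -> exists r, D r /\ ~ P r /\ foldr (fun Q acc => f Q * acc) 1 L2 = x * r) /\
        (~ List.In P L2 -> D (foldr (fun Q acc => f Q * acc) 1 L2) /\ ~ P (foldr (fun Q acc => f Q * acc) 1 L2)).
      elim=> [|Q L2 IH] hnd2 hsub2.
        split; first by [].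
        by move=> _; split; [exact: D1|exact: (pr_n1 hPp)].
      have [hnQ hnd2'] : ~ List.In Q L2 /\ List.NoDup L2 by inversion hnd2.
      have hsub2' : forall Q, List.In Q L2 -> List.In Q L' by move=> Q' h; apply: hsub2; right.
      have hQL : List.In Q L' by apply: hsub2; left.
      have [IH1 IH2] := IH hnd2' hsub2'.
      split.
        move=> [eQ|hPL2] /=.
          subst Q; have [h1 h2] := IH2 hnQ.
          by exists (foldr (fun Q acc => f Q * acc) 1 L2); rewrite fP.
        have hne : Q <> P by move=> e; apply: hnQ; rewrite e.
        have [r [hr [hnr ->]]] := IH1 hPL2.
        have [h1 h2] := hfQ Q hQL hne.
        exists (f Q * r); split; first exact: Dmul.
        split; first exact: (pr_mulN hPp). by ring.
      move=> hnP /=.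
      have hne : Q <> P by move=> e; apply: hnP; left.
      have hnP2 : ~ List.In P L2 by move=> h; apply: hnP; right.
      have [h1 h2] := IH2 hnP2; have [h3 h4] := hfQ Q hQL hne.
      split; first exact: Dmul. exact: (pr_mulN hPp).
    have [r [hr [hnr he]]] := (prodL L' hnd (fun Q h => h)).1 hPL.
    apply: hnr; have := hPw _ (prod_elt hfI); rewrite he.
    by have -> : x^-1 * (x * r) = r by fld.
  have hnPx : ~ P x by move=> hPx; apply: hPL; apply/hin.
  have hfI : forall Q, List.In Q L' -> Ii Q x by move=> Q _; exact: hxI.
  have := hPw _ (prod_elt hfI); rewrite prod_const hL'e /= exprS.
  have -> : x^-1 * (x * x ^+ size rest) = x ^+ size rest by fld.
  exact: (@pr_expN P hPp x (size rest) hx hnPx).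
apply: seteq => // z [d [hd ->]].
exact: (smmul (frac_sm (st_frac hFf)) hd hxF).
Qed.

Theorem main_eq : star_super_SH D star <-> star_IRKT D star.
Proof. split; [exact: dirA|exact: dirB]. Qed.


End Main.

Theorem propositionQ3 (K : fieldType) (D : kset K) (star : kset K -> kset K) :
  is_subring D -> is_quotient_field D ->
  star_operation D star -> finite_character D star ->
  (star_super_SH D star <-> star_IRKT D star).
Proof. move=> h1 h2 h3 h4; exact: (main_eq h1 h2 h3 h4). Qed.
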